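(* Let $M\ge K\ge 1$, $N\ge1$, $\sigma^2>0$, and let $\boldsymbol{H}_{\mathrm d}=[\boldsymbol h_{\mathrm d,1},\dots,\boldsymbol h_{\mathrm d,K}]\in\mathbb C^{M\times K}$, $\boldsymbol H_{\mathrm r}=[\boldsymbol h_{\mathrm r,1},\dots,\boldsymbol h_{\mathrm r,K}]\in\mathbb C^{N\times K}$ and $\boldsymbol G\in\mathbb C^{M\times N}$. Assume that $\boldsymbol H_{\mathrm d}$ has full column rank $K$ and that $$\sigma_{\max}(\boldsymbol G)\,\sigma_{\max}(\boldsymbol H_{\mathrm r})<\sigma_{\min}(\boldsymbol H_{\mathrm d}).$$ Then for arbitrary targets $r_1,\dots,r_K\ge 0$, problem (P1) with unlimited power budgets is feasible: there exist $\boldsymbol\phi\in\mathbb C^N$ with $|\phi_n|=1$ for all $n$ and $\boldsymbol q\in\mathbb R^K$, $\boldsymbol q>\boldsymbol 0$, such that $\widetilde\gamma_k(\boldsymbol\phi,\boldsymbol q)\ge r_k$ for all $k=1,\dots,K$.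
   Context: For $\boldsymbol\phi\in\mathbb C^N$ with unit-modulus entries, let $\boldsymbol\Phi=\mathrm{Diag}(\boldsymbol\phi)$ and define the effective channels $\boldsymbol h_k(\boldsymbol\phi)=\boldsymbol G\boldsymbol\Phi\boldsymbol h_{\mathrm r,k}+\boldsymbol h_{\mathrm d,k}$, $k=1,\dots,K$. For powers $\boldsymbol q=(q_1,\dots,q_K)\ge \boldsymbol 0$ set $\boldsymbol W_k(\boldsymbol\phi,\boldsymbol q)=\sigma^2\boldsymbol I_M+\sum_{i\ne k}q_i\boldsymbol h_i(\boldsymbol\phi)\boldsymbol h_i(\boldsymbol\phi)^H$ and define the (optimal linear receiver) SINR of user $k$ as $\widetilde\gamma_k(\boldsymbol\phi,\boldsymbol q)=q_k\,\boldsymbol h_k(\boldsymbol\phi)^H\boldsymbol W_k(\boldsymbol\phi,\boldsymbol q)^{-1}\boldsymbol h_k(\boldsymbol\phi)$. $\sigma_{\max}(\boldsymbol X)$ and $\sigma_{\min}(\boldsymbol X)$ denote the largest and smallest nonzero singular values of a matrix $\boldsymbol X$. Problem (P1) with unlimited power means: find $(\boldsymbol\phi,\boldsymbol q)$ with $|\phi_n|=1$ for all $n$, $\boldsymbol q\ge\boldsymbol 0$ (no upper bound), and $\widetilde\gamma_k(\boldsymbol\phi,\boldsymbol q)\ge r_k$ for all $k$. *)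

(* Defs.v *)
From HB Require Import structures.
From mathcomp Require Import all_boot all_order all_algebra.
From mathcomp Require Import complex.
Set Implicit Arguments. Unset Strict Implicit. Unset Printing Implicit Defensive.
Import Order.TTheory GRing.Theory Num.Theory.
Local Open Scope ring_scope.
Local Open Scope complex_scope.

Definition hermT (R : rcfType) (m n : nat) (X : 'M[R[i]]_(m, n)) : 'M[R[i]]_(n, m) :=
  map_mx (@conjc R) X^T.

Definition singval (R : rcfType) (m n : nat) (X : 'M[R[i]]_(m, n)) (s : R) : Prop :=
  0 < s /\ eigenvalue (hermT X *m X) ((s ^+ 2)%:C).

(* sigma_max(X) < t  (the largest nonzero singular value, 0 if X = 0, is < t)
   written as "every nonzero singular value is < t" etc.  The paper's
   hypothesis  sigma_max(G) sigma_max(Hr) < sigma_min(Hd)  is literally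
   max_{a} max_{b} a*b < min_{c} c, i.e. a*b < c for all nonzero singular
   values a of G, b of Hr, c of Hd. *)
Definition sv_condition (R : rcfType) (M N K : nat)
    (G : 'M[R[i]]_(M, N)) (Hr : 'M[R[i]]_(N, K)) (Hd : 'M[R[i]]_(M, K)) : Prop :=
  forall a b c, singval G a -> singval Hr b -> singval Hd c -> a * b < c.

Definition eff_chan (R : rcfType) (M N K : nat)
    (G : 'M[R[i]]_(M, N)) (Hr : 'M[R[i]]_(N, K)) (Hd : 'M[R[i]]_(M, K))
    (phi : 'rV[R[i]]_N) (k : 'I_K) : 'cV[R[i]]_M :=
  G *m diag_mx phi *m col k Hr + col k Hd.

Definition Wmat (R : rcfType) (M N K : nat)
    (G : 'M[R[i]]_(M, N)) (Hr : 'M[R[i]]_(N, K)) (Hd : 'M[R[i]]_(M, K))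
    (sigma2 : R) (phi : 'rV[R[i]]_N) (q : 'I_K -> R) (k : 'I_K) : 'M[R[i]]_M :=
  (sigma2%:C)%:M + \sum_(i < K | i != k)
      (q i)%:C *: (eff_chan G Hr Hd phi i *m hermT (eff_chan G Hr Hd phi i)).

Definition sinr (R : rcfType) (M N K : nat)
    (G : 'M[R[i]]_(M, N)) (Hr : 'M[R[i]]_(N, K)) (Hd : 'M[R[i]]_(M, K))
    (sigma2 : R) (phi : 'rV[R[i]]_N) (q : 'I_K -> R) (k : 'I_K) : R[i] :=
  (q k)%:C * (hermT (eff_chan G Hr Hd phi k)
                 *m invmx (Wmat G Hr Hd sigma2 phi q k)
                 *m eff_chan G Hr Hd phi k) 0 0.

(* Main.v *)
Require Import Defs.
From HB Require Import structures.
From mathcomp Require Import all_boot all_order all_algebra.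
From mathcomp Require Import complex.
From mathcomp Require Import sesquilinear spectral.
From mathcomp Require Import lra.
Import Order.TTheory GRing.Theory Num.Theory.
Local Open Scope ring_scope.
Local Open Scope complex_scope.
Set Implicit Arguments. Unset Strict Implicit. Unset Printing Implicit Defensive.

Section Aux.
Variable R : rcfType.
Local Notation C := (R[i]).

Lemma hermT_mul m n p (A : 'M[C]_(m, n)) (B : 'M[C]_(n, p)) :
  hermT (A *m B) = hermT B *m hermT A.
Proof. by rewrite /hermT trmx_mul map_mxM. Qed.

Lemma hermTK m n (A : 'M[C]_(m, n)) : hermT (hermT A) = A.
Proof. by apply/matrixP => i j; rewrite !mxE conjcK. Qed.

Lemma hermTD m n (A B : 'M[C]_(m, n)) : hermT (A + B) = hermT A + hermT B.
Proof. by apply/matrixP => i j; rewrite !mxE rmorphD. Qed.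

Lemma hermTN m n (A : 'M[C]_(m, n)) : hermT (- A) = - hermT A.
Proof. by apply/matrixP => i j; rewrite !mxE rmorphN. Qed.

Lemma hermTB m n (A B : 'M[C]_(m, n)) : hermT (A - B) = hermT A - hermT B.
Proof. by rewrite hermTD hermTN. Qed.

Lemma hermTZ m n (a : C) (A : 'M[C]_(m, n)) : hermT (a *: A) = a^* *: hermT A.
Proof. by apply/matrixP => i j; rewrite !mxE rmorphM. Qed.

Lemma hermT0 m n : hermT (0 : 'M[C]_(m, n)) = 0.
Proof. by apply/matrixP => i j; rewrite !mxE conjc0. Qed.

Lemma hermT_sum m n (I : finType) (P : pred I) (F : I -> 'M[C]_(m, n)) :
  hermT (\sum_(i | P i) F i) = \sum_(i | P i) hermT (F i).
Proof.
apply/matrixP => i j; rewrite !mxE !summxE rmorph_sum.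

by apply: eq_bigr => k _; rewrite !mxE.
Qed.

Lemma conjR (a : R) : Num.conj (a%:C : C) = a%:C.
Proof. by change (conjc (a%:C) = a%:C); apply/eqP; rewrite eq_complex /= oppr0 !eqxx. Qed.

Lemma hermT_scal n (a : R) : hermT ((a%:C)%:M : 'M[C]_n) = (a%:C)%:M.
Proof.
apply/matrixP => i j; rewrite !mxE eq_sym.
by case: eqP => _; rewrite ?mulr1n ?mulr0n ?conjc_real ?conjc0.

Qed.

Lemma hermT1 n : hermT (1%:M : 'M[C]_n) = 1%:M.
Proof. by have := hermT_scal n 1. Qed.

Definition nr m (x : 'cV[C]_m) : R := complex.Re ((hermT x *m x) 0 0).

Lemma nrm2_sum m (x : 'cV[C]_m) :
  (hermT x *m x) 0 0 = \sum_i `|x i 0| ^+ 2.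
Proof.
rewrite !mxE; apply: eq_bigr => i _; rewrite !mxE normCK mulrC.
by [].
Qed.

Lemma nrm2_ge0 m (x : 'cV[C]_m) : 0 <= (hermT x *m x) 0 0.
Proof. by rewrite nrm2_sum; apply: sumr_ge0 => i _; rewrite exprn_ge0. Qed.

Lemma real_ge0 (z : C) : 0 <= z -> z = (complex.Re z)%:C.
Proof. by move=> z0; rewrite RRe_real // ger0_real. Qed.

Lemma nrE m (x : 'cV[C]_m) : (hermT x *m x) 0 0 = (nr x)%:C.
Proof. exact/real_ge0/nrm2_ge0. Qed.

Lemma nr_ge0 m (x : 'cV[C]_m) : 0 <= nr x.
Proof. by rewrite -ler0c -nrE nrm2_ge0. Qed.

Lemma nr_eq0 m (x : 'cV[C]_m) : nr x = 0 -> x = 0.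
Proof.
move=> h; have : (hermT x *m x) 0 0 = 0 by rewrite nrE h.
rewrite nrm2_sum => /eqP; rewrite psumr_eq0 => [/allP H|i _]; last exact: exprn_ge0.
apply/matrixP => i j; rewrite ord1 mxE.
have /H := mem_index_enum i; rewrite /= sqrf_eq0 normr_eq0.
by move/eqP.
Qed.

Lemma nr_gt0 m (x : 'cV[C]_m) : x != 0 -> 0 < nr x.
Proof.
move=> xn0; rewrite lt_def nr_ge0 andbT; apply/eqP => /nr_eq0 h.
by rewrite h eqxx in xn0.
Qed.


Lemma diag_form n (z : 'cV[C]_n) (d : 'rV[C]_n) :
  (hermT z *m diag_mx d *m z) 0 0 = \sum_j `|z j 0| ^+ 2 * d 0 j.
Proof.
rewrite mul_mx_diag !mxE; apply: eq_bigr => j _.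
by rewrite !mxE normCK mulrAC [z j 0 * _]mulrC.
Qed.

Lemma sv_bounds m n (X : 'M[C]_(m, n)) : (0 < n)%N ->
  exists dmin dmax : R,
    [/\ 0 <= dmin, eigenvalue (hermT X *m X) dmin%:C,
        eigenvalue (hermT X *m X) dmax%:C,
        forall y, dmin * nr y <= nr (X *m y) &
        forall y, nr (X *m y) <= dmax * nr y].
Proof.
move=> n_gt0.
set P := hermT X *m X.
have hP : hermT P = P by rewrite /P hermT_mul hermTK.
have Pn : P \is normalmx.
  by apply/normalmxP; change (P *m hermT P = hermT P *m P); rewrite hP.
have Uu := spectral_unitarymx P.
have Pdef : P = invmx (spectralmx P) *m diag_mx (spectral_diag P) *m spectralmx P.
  exact/orthomx_spectralP.
rewrite invmx_unitary // in Pdef.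
set U := spectralmx P in Uu Pdef; set d := spectral_diag P in Pdef.
change (P = hermT U *m diag_mx d *m U) in Pdef.
have hUU : U *m hermT U = 1%:M by apply/unitarymxP.
have hUU' : hermT U *m U = 1%:M by apply: mulmx1C.
have form (y : 'cV[C]_n) : (hermT (X *m y) *m (X *m y)) 0 0
     = \sum_j `|(U *m y) j 0| ^+ 2 * d 0 j.
  rewrite -(diag_form (U *m y) d) hermT_mul.
  congr (_ _ 0 0).
  by rewrite !mulmxA -[hermT y *m hermT X *m X]mulmxA -/P Pdef hermT_mul !mulmxA.
have normU (y : 'cV[C]_n) : (hermT y *m y) 0 0 = \sum_j `|(U *m y) j 0| ^+ 2.
  rewrite -nrm2_sum hermT_mul.
  by rewrite -mulmxA [hermT U *m _]mulmxA hUU' mul1mx.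
have dge0 j : 0 <= d 0 j.
  have := nrm2_ge0 (X *m (hermT U *m delta_mx j 0)).
  rewrite form mulmxA hUU mul1mx (bigD1 j) //= big1 => [|k kj].
    by rewrite mxE !eqxx /= normr1 expr1n mul1r addr0.
  by rewrite mxE (negPf kj) /= normr0 expr0n /= mul0r.
pose dr j := complex.Re (d 0 j).
have drE j : d 0 j = (dr j)%:C by apply: real_ge0.
pose j0 := Ordinal n_gt0.
have eig j : eigenvalue P (dr j)%:C.
  apply/eigenvalueP; exists (delta_mx 0 j *m U).
    rewrite Pdef !mulmxA -[delta_mx 0 j *m U *m hermT U]mulmxA hUU mulmx1.
    rewrite -drE scalemxAl; congr (_ *m U).
    apply/matrixP => a b; rewrite mul_mx_diag !mxE.
    by rewrite ord1 eqxx /=; case: eqP => [->|_]; rewrite ?mulr1 ?mul1r ?mulr0 ?mul0r.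
  apply/negP => /eqP h.
  have : (delta_mx 0 j : 'rV[C]_n) *m U *m hermT U = 0 by rewrite h mul0mx.
  rewrite -mulmxA hUU mulmx1 => /matrixP/(_ 0 j); rewrite !mxE !eqxx /=.
  by move/eqP; rewrite oner_eq0.
case: (arg_minP dr (P:=xpredT) (i0:=j0)) => // jmin _ Hmin.
case: (arg_maxP dr (P:=xpredT) (i0:=j0)) => // jmax _ Hmax.
exists (dr jmin), (dr jmax); split => //.
- by rewrite -ler0c -drE.
- move=> y; rewrite -lecR rmorphM /= -[(nr (X *m y))%:C]nrE -[(nr y)%:C]nrE.
  rewrite form normU mulr_sumr; apply: ler_sum => j _.
  rewrite mulrC drE; apply: ler_wpM2l; first exact: exprn_ge0.
  by rewrite lecR Hmin.
- move=> y; rewrite -lecR rmorphM /= -[(nr (X *m y))%:C]nrE -[(nr y)%:C]nrE.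
  rewrite form normU mulr_sumr; apply: ler_sum => j _.
  rewrite [_%:C * _]mulrC drE; apply: ler_wpM2l; first exact: exprn_ge0.
  by rewrite lecR; apply: Hmax.
Qed.


Lemma nrN m (x : 'cV[C]_m) : nr (- x) = nr x.
Proof. by rewrite /nr hermTN mulNmx mulmxN opprK. Qed.

Lemma eig0_ker m n (X : 'M[C]_(m, n)) : eigenvalue (hermT X *m X) 0 ->
  exists2 y : 'cV[C]_n, y != 0 & X *m y = 0.
Proof.
move=> /eigenvalueP [v vP vn0]; exists (hermT v).
  by apply: contraNneq vn0 => h; rewrite -[v]hermTK h hermT0.
have hP : hermT (hermT X *m X) = hermT X *m X by rewrite hermT_mul hermTK.
have Py : hermT X *m X *m hermT v = 0.
  by rewrite -hP -hermT_mul vP scale0r hermT0.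
apply: nr_eq0; rewrite /nr hermT_mul -!mulmxA (mulmxA (hermT X)) Py.
by rewrite mulmx0 mxE.
Qed.

Lemma colinj M K (Hd : 'M[C]_(M, K)) : \rank Hd = K ->
  forall y : 'cV[C]_K, Hd *m y = 0 -> y = 0.
Proof.
move=> rk y Hy.
have rf : row_free Hd^T by rewrite /row_free mxrank_tr rk.
have : y^T *m Hd^T == 0 by rewrite -trmx_mul Hy trmx0.
rewrite mulmx_free_eq0 // => /eqP h.
by rewrite -[y]trmxK h trmx0.
Qed.

Lemma sing_of m n (X : 'M[C]_(m, n)) (d : R) : 0 < d ->
  eigenvalue (hermT X *m X) d%:C -> singval X (Num.sqrt d).
Proof.
move=> d0 e; split; first by rewrite sqrtr_gt0.
by rewrite sqr_sqrtr // ltW.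
Qed.

Lemma fullrank M N K (G : 'M[C]_(M, N)) (Hr : 'M[C]_(N, K)) (Hd : 'M[C]_(M, K)) :
  (1 <= K)%N -> (1 <= N)%N -> \rank Hd = K -> sv_condition G Hr Hd ->
  forall x : 'cV[C]_K, (G *m Hr + Hd) *m x = 0 -> x = 0.
Proof.
move=> K1 N1 rk sv x Hx.
case: (eqVneq x 0) => // xn0; exfalso.
have [c0 [c1 [c0ge0 eigc _ lowc _]]] := sv_bounds Hd K1.
have [a0 [aG [_ _ eigG _ upG]]] := sv_bounds G N1.
have [b0 [bR [_ _ eigR _ upR]]] := sv_bounds Hr K1.
set z := Hr *m x.
have HdE : Hd *m x = - (G *m z).
  by apply/eqP; rewrite -addr_eq0 addrC /z mulmxA -mulmxDl Hx.
have Hdxn0 : Hd *m x != 0.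
  by apply/eqP => h; move/eqP: xn0; apply; exact: (colinj rk h).
have nHd : 0 < nr (Hd *m x) by apply: nr_gt0.
have nx : 0 < nr x by apply: nr_gt0.
have c0pos : 0 < c0.
  rewrite lt_def c0ge0 andbT; apply/eqP => c00.
  move: eigc; rewrite c00 => /eig0_ker [y yn0 hy].
  by move: yn0; rewrite (colinj rk hy) eqxx.
have e1 := lowc x.
have e2 := upG z.
have e3 := upR x.
rewrite HdE nrN in nHd e1.
have nz0 := nr_ge0 z.
have aGpos : 0 < aG.
  rewrite ltNge; apply/negP => h.
  have : aG * nr z <= 0 by apply: mulr_le0_ge0.
  by move=> h2; have := lt_le_trans nHd (le_trans e2 h2); rewrite ltxx.
have nzpos : 0 < nr z.
  rewrite lt_def nz0 andbT; apply/eqP => h.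
  by move: e2; rewrite h mulr0 => h2; have := lt_le_trans nHd h2; rewrite ltxx.
have bRpos : 0 < bR.
  rewrite ltNge; apply/negP => h.
  have : bR * nr x <= 0 by apply: mulr_le0_ge0 => //; apply: ltW.
  by move=> h2; have := lt_le_trans nzpos (le_trans e3 h2); rewrite ltxx.
have := sv _ _ _ (sing_of aGpos eigG) (sing_of bRpos eigR) (sing_of c0pos eigc).
have sa := sqr_sqrtr (ltW aGpos).
have sb := sqr_sqrtr (ltW bRpos).
have sc := sqr_sqrtr (ltW c0pos).
have pa : 0 < Num.sqrt aG by rewrite sqrtr_gt0.
have pb : 0 < Num.sqrt bR by rewrite sqrtr_gt0.
move: (Num.sqrt aG) (Num.sqrt bR) (Num.sqrt c0) sa sb sc pa pb => a b c sa sb sc pa pb abc.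
have chain : c0 * nr x <= aG * (bR * nr x).
  apply: (le_trans e1); apply: (le_trans e2).
  by rewrite ler_pM2l.
move: (nr x) nx chain => n nx chain.
rewrite -sa -sb -sc in chain.
rewrite mulrA ler_pM2r // -exprMn in chain.
have : (a * b) ^+ 2 < c ^+ 2 by rewrite ltrXn2r // mulr_ge0 // ltW.
by rewrite ltNge chain.
Qed.


Lemma rowfree_of_inj m n (A : 'M[C]_(m, n)) :
  (forall v : 'rV[C]_m, v *m A = 0 -> v = 0) -> row_free A.
Proof.
move=> H; rewrite -kermx_eq0; apply/eqP/row_matrixP => i.
by rewrite row0; apply: H; rewrite -row_mul mulmx_ker row0.
Qed.

Lemma right_inv M K (H : 'M[C]_(M, K)) :
  (forall x : 'cV[C]_K, H *m x = 0 -> x = 0) ->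
  exists Z : 'M[C]_(M, K), hermT H *m Z = 1%:M.
Proof.
move=> Hinj; apply/row_freeP/rowfree_of_inj => v hv.
have : H *m hermT v = 0 by rewrite -[H]hermTK -hermT_mul hv hermT0.
by move/Hinj => h; rewrite -[v]hermTK h hermT0.
Qed.

Section Sinr.
Variables (M N K : nat) (G : 'M[C]_(M, N)) (Hr : 'M[C]_(N, K))
  (Hd : 'M[C]_(M, K)) (sigma2 : R) (phi : 'rV[C]_N) (q : 'I_K -> R) (k : 'I_K).

Let h := eff_chan G Hr Hd phi.
Let W := Wmat G Hr Hd sigma2 phi q k.

Lemma hermW : hermT W = W.
Proof.
rewrite /W /Wmat hermTD hermT_scal hermT_sum; congr (_ + _).
apply: eq_bigr => i _; rewrite hermTZ conjR hermT_mul hermTK //.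
Qed.

Lemma Wform (x : 'cV[C]_M) : (forall i, 0 <= q i) ->
  (sigma2 * nr x)%:C <= (hermT x *m W *m x) 0 0.
Proof.
move=> q0.
have -> : hermT x *m W *m x = sigma2%:C *: (hermT x *m x) +
   \sum_(i < K | i != k) (q i)%:C *:
     (hermT (hermT (h i) *m x) *m (hermT (h i) *m x)).
  rewrite /W /Wmat mulmxDr mulmxDl mul_mx_scalar -scalemxAl; congr (_ + _).
  rewrite mulmx_sumr mulmx_suml; apply: eq_bigr => i _.
  rewrite -scalemxAr -scalemxAl hermT_mul hermTK !mulmxA //.
rewrite mxE summxE rmorphM /= -nrE [X in _ <= X + _]mxE lerDl; apply: sumr_ge0 => i _.
by rewrite mxE mulr_ge0 ?ler0c ?nrm2_ge0.
Qed.


Let B (x y : 'cV[C]_M) := (hermT x *m W *m y) 0 0.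

Lemma BBr x y1 y2 : B x (y1 - y2) = B x y1 - B x y2.
Proof. by rewrite /B mulmxBr mxE [X in _ + X]mxE. Qed.
Lemma BBl x1 x2 y : B (x1 - x2) y = B x1 y - B x2 y.
Proof. by rewrite /B hermTB !mulmxBl mxE [X in _ + X]mxE. Qed.
Lemma BZr x a y : B x (a *: y) = a * B x y.
Proof. by rewrite /B -scalemxAr mxE. Qed.
Lemma BZl (a : R) x y : B (a%:C *: x) y = a%:C * B x y.
Proof. by rewrite /B hermTZ conjR -!scalemxAl mxE. Qed.

Lemma sinr_lb (w : 'cV[C]_M) : 0 < sigma2 -> (forall i, 0 <= q i) ->
  (forall i, hermT (h i) *m w = ((i == k)%:R)%:M) ->
  (q k * (sigma2 * nr w)^-1)%:C <= sinr G Hr Hd sigma2 phi q k.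
Proof.
move=> s0 q0 hw.
have wn0 : w != 0.
  apply/eqP => w0; have := hw k; rewrite w0 mulmx0 eqxx => /matrixP/(_ 0 0).
  by rewrite !mxE /= => /eqP; rewrite eq_sym oner_eq0.
have nw := nr_gt0 wn0.
have Ww : W *m w = sigma2%:C *: w.
  rewrite /W /Wmat mulmxDl mul_scalar_mx mulmx_suml big1 ?addr0 // => i ik.
  by rewrite -scalemxAl -mulmxA hw (negPf ik) /= mul_mx_scalar scale0r scaler0.
have Wunit : W \in unitmx.
  rewrite -row_free_unit; apply: rowfree_of_inj => v hv.
  set y := hermT v.
  have Wy : W *m y = 0 by rewrite /y -hermW -hermT_mul hv hermT0.
  have := Wform y q0; rewrite -mulmxA Wy mulmx0 mxE.
  rewrite -[0 : C]/(0%:C) lecR pmulr_rle0 // => ny.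
  have /nr_eq0 y0 : nr y = 0 by apply/le_anti; rewrite ny nr_ge0.
  by rewrite -[v]hermTK -/y y0 hermT0.
set u := invmx W *m h k.
have Wu : W *m u = h k by rewrite mulmxA mulmxV // mul1mx.
have hkW : hermT (h k) = hermT u *m W by rewrite -Wu hermT_mul hermW.
have wWu : B w u = 1.
  rewrite /B -mulmxA Wu.
  have <- : hermT (hermT (h k) *m w) = hermT w *m h k by rewrite hermT_mul hermTK.
  by rewrite hw eqxx hermT1 mxE.
have wW : hermT w *m W = sigma2%:C *: hermT w.
  by rewrite -hermW -hermT_mul Ww hermTZ conjR.
have ht : sigma2%:C * (hermT w *m u) 0 0 = 1.
  by rewrite -wWu /B wW -scalemxAl [RHS]mxE.
have uWw : B u w = 1.
  rewrite /B -mulmxA Ww -scalemxAr mxE.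
  have -> : (hermT u *m w) 0 0 = Num.conj ((hermT w *m u) 0 0).
    by rewrite -[hermT u *m w]hermTK hermT_mul hermTK [LHS]mxE [in LHS]mxE.
  by rewrite -(conjR sigma2) -rmorphM ht rmorph1.
have wWw : B w w = sigma2%:C * (nr w)%:C.
  by rewrite /B -mulmxA Ww -scalemxAr mxE nrE.
set c := (sigma2 * nr w)^-1.
set e := u - c%:C *: w.
have Eq : B e e = B u u - c%:C.
  rewrite /e BBl !BBr BZl !BZr BZl uWw wWu wWw.
  have -> : c%:C * (c%:C * (sigma2%:C * (nr w)%:C)) = c%:C.
    rewrite -!rmorphM /c mulVf ?mulr1 //.
    by rewrite mulf_neq0 // gt_eqF.
  by rewrite mulr1 opprB addrA subrK.
have Bee : 0 <= B e e.
  by apply: le_trans _ (Wform e q0); rewrite ler0c mulr_ge0 ?nr_ge0 ?ltW.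
have cB : c%:C <= B u u.
  by rewrite -subr_ge0 -Eq.
rewrite /sinr -mulmxA -/W -/h -/u hkW -/(B u u) rmorphM /=.
by apply: ler_wpM2l => //; rewrite ler0c.
Qed.

End Sinr.

End Aux.

Unset Implicit Arguments.

Theorem lemma1 (R : rcfType) (M K N : nat) (sigma2 : R)
    (G : 'M[R[i]]_(M, N)) (Hr : 'M[R[i]]_(N, K)) (Hd : 'M[R[i]]_(M, K))
    (r : 'I_K -> R) :
  (1 <= K)%N -> (K <= M)%N -> (1 <= N)%N -> 0 < sigma2 ->
  \rank Hd = K ->
  sv_condition G Hr Hd ->
  (forall k, 0 <= r k) ->
  exists (phi : 'rV[R[i]]_N) (q : 'I_K -> R),
    (forall n, `|phi 0 n| = 1) /\
    (forall k, 0 < q k) /\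
    (forall k, (r k)%:C <= sinr G Hr Hd sigma2 phi q k).
Proof.
move=> K1 KM N1 s0 rk sv r0.
pose phi : 'rV[R[i]]_N := const_mx 1.
have dphi : diag_mx phi = 1%:M by rewrite diag_const_mx.
set H := G *m Hr + Hd.
have hcol i : eff_chan G Hr Hd phi i = H *m delta_mx i 0.
  by rewrite /eff_chan dphi mulmx1 !colE /H mulmxDl mulmxA.
have inj := fullrank K1 N1 rk sv.
have [Z hZ] := right_inv inj.
pose w (k : 'I_K) : 'cV[R[i]]_M := Z *m delta_mx k 0.
have hw (k i : 'I_K) : hermT (eff_chan G Hr Hd phi i) *m w k = ((i == k)%:R)%:M.
  rewrite hcol hermT_mul /w mulmxA -(mulmxA _ (hermT H)) hZ mulmx1.
  apply/matrixP => a b; rewrite !ord1 !mxE (bigD1 i) //= big1 => [|j ji].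
    rewrite !mxE !eqxx /= mulr1n addr0.
    have -> : (1 -i* 0 : R[i]) = 1 by apply/eqP; rewrite eq_complex /= oppr0 !eqxx.
    by rewrite andbT mul1r.
  by rewrite !mxE (negPf ji) /= oppr0 mul0r.
have wn0 (k : 'I_K) : w k != 0.
  apply/eqP => w0; have := hw k k; rewrite w0 mulmx0 eqxx => /matrixP/(_ 0 0).
  by rewrite !mxE /= => /eqP; rewrite eq_sym oner_eq0.
pose q (k : 'I_K) := (r k + 1) * (sigma2 * nr (w k)).
have qpos (k : 'I_K) : 0 < q k.
  by rewrite /q mulr_gt0 // ?mulr_gt0 ?nr_gt0 // ltr_wpDl.
exists phi, q; split; first by move=> n; rewrite mxE normr1.
split=> // k.
have := sinr_lb (k := k) (w := w k) s0 (fun i => ltW (qpos i)) (hw k).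
have -> : q k * (sigma2 * nr (w k))^-1 = r k + 1.
  by rewrite /q mulfK // gt_eqF // mulr_gt0 // nr_gt0.
apply: le_trans; rewrite lecR lerDl //.
Qed.
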